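(* Let $n,k,r,\ell$ be positive integers. Then \[S_{\geq \ell}(n,k,r)=(k+r-1)S_{\geq \ell}(n-1,k,r)+\binom{n-1}{\ell-1}\Big((k-1)S_{\geq \ell}(n-\ell,k-1,r)+S_{\geq \ell}(n-\ell,k,r-1)\Big),\] where terms with $n-\ell<0$ (for which $\binom{n-1}{\ell-1}=0$) are $0$ and the term $(k-1)S_{\geq \ell}(n-\ell,k-1,r)$ is $0$ when $k=1$.
   Context: For integers $N\ge 0$, $k\ge1$, $r\ge 0$, $\ell\ge1$, $S_{\geq \ell}(N,k,r)$ is the number of ways to partition $[N]=\{1,\dots,N\}$ into $r+k-1$ non-empty blocks, each of size at least $\ell$, where $r$ of the blocks receive the label $1$ (blocks with label $1$ are indistinguishable among themselves) and the remaining $k-1$ blocks receive the distinct labels $2,3,\dots,k$. *)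

(* Defs.v *)
From mathcomp Require Import all_boot.
Set Implicit Arguments. Unset Strict Implicit. Unset Printing Implicit Defensive.

(* A labeled partition of [N] = 'I_N counted by S_{>= l}(N,k,r):
   a set partition Q of [N] into r+k-1 nonempty blocks, each of size >= l,
   together with an injective assignment g of the k-1 distinct labels
   2,...,k (indexed by 'I_(k-1)) to blocks of Q; the remaining r blocks
   carry the label 1 (indistinguishable among themselves). *)
Definition is_labeled_partition (l N k r : nat)
  (QG : {set {set 'I_N}} * {ffun 'I_(k.-1) -> {set 'I_N}}) : bool :=
  [&& partition QG.1 [set: 'I_N],
      #|QG.1| == r + k - 1,
      [forall B in QG.1, l <= #|B|],
      injectiveb QG.2 &
      [forall i, QG.2 i \in QG.1]].

Arguments is_labeled_partition : clear implicits.

Definition Sge (l N k r : nat) : nat :=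
  #|[set QG : {set {set 'I_N}} * {ffun 'I_(k.-1) -> {set 'I_N}} | is_labeled_partition l N k r QG]|.

(* Main.v *)
Require Import Defs.
From mathcomp Require Import all_boot zify.
Set Implicit Arguments. Unset Strict Implicit. Unset Printing Implicit Defensive.

Definition okP (T : finType) (l m : nat) (D : {set T}) (P : {set {set T}}) : bool :=
  [&& partition P D, #|P| == m & [forall B in P, l <= #|B|]].
Definition cnt (T : finType) l m (D : {set T}) := #|[set P | okP l m D P]|.

Lemma bij_card (T1 T2 : finType) (A : {set T1}) (B : {set T2}) (f : T1 -> T2) (g : T2 -> T1) :
  {in A, forall x, f x \in B} -> {in B, forall y, g y \in A} ->
  {in A, cancel f g} -> {in B, cancel g f} -> #|A| = #|B|.
Proof.
move=> fAB gBA fK gK; apply/eqP; rewrite eqn_leq; apply/andP; split.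
- rewrite -(card_in_imset (can_in_inj fK)); apply: subset_leq_card.
  by apply/subsetP=> _ /imsetP[x Ax ->]; exact: fAB.
- rewrite -(card_in_imset (can_in_inj gK)); apply: subset_leq_card.
  by apply/subsetP=> _ /imsetP[x Ax ->]; exact: gBA.
Qed.

Lemma card_pair (T1 T2 : finType) (p : pred T1) (q : T1 -> pred T2) :
  #|[set x : T1 * T2 | p x.1 && q x.1 x.2]| = \sum_(a | p a) #|[set b | q a b]|.
Proof.
rewrite -sum1_card (eq_bigl (fun x : T1 * T2 => p x.1 && q x.1 x.2)); last by move=> ?; rewrite inE.
rewrite -(pair_big_dep p q (fun _ _ => 1)) /=.
apply: eq_bigr => a _; rewrite -sum1_card; apply: eq_bigl => b; by rewrite inE.
Qed.

Lemma Sge_cnt l N k r :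
  Sge l N k r = cnt l (r + k - 1) [set: 'I_N] * (r + k - 1) ^_ k.-1.
Proof.
rewrite /Sge /cnt.
rewrite (eq_card (B := [set QG : {set {set 'I_N}} * {ffun 'I_(k.-1) -> {set 'I_N}} |
   okP l (r + k - 1) [set: 'I_N] QG.1 && (injectiveb QG.2 && [forall i, QG.2 i \in QG.1])])); last first.
  by move=> QG; rewrite !inE /is_labeled_partition /okP !andbA.
rewrite (card_pair (okP l (r + k - 1) [set: 'I_N]) (fun Q (g : {ffun 'I_(k.-1) -> {set 'I_N}}) => injectiveb g && [forall i, g i \in Q])).
rewrite (eq_bigr (fun _ => (r + k - 1) ^_ k.-1)); last first.
  move=> Q /and3P[_ /eqP HQ _].
  rewrite -HQ -[in RHS](card_ord k.-1) -card_inj_ffuns_on; apply: eq_card => g.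
  rewrite !inE andbC; congr (_ && _); apply/forallP/ffun_onP => H i; exact: H.
by rewrite sum_nat_const; congr (_ * _); apply: eq_card => Q; rewrite inE.
Qed.

Lemma okP_imset (T T' : finType) (f : T -> T') (injf : injective f) l m (D : {set T}) (P : {set {set T}}) :
  okP l m (f @: D) [set f @: (B : {set T}) | B in P] = okP l m D P.
Proof.
rewrite /okP imset_partition // (card_imset _ (imset_inj injf)).
congr [&& _, _ & _]. apply/forall_inP/forall_inP => H B BP.
- by rewrite -(card_imset _ injf); apply: H; rewrite imset_f.
- case/imsetP: BP => B' B'P ->; rewrite card_imset //; exact: H.
Qed.

Lemma cnt_imset (T T' : finType) (f : T -> T') (injf : injective f) l m (D : {set T}) :
  cnt l m (f @: D) = cnt l m D.
Proof.
rewrite /cnt; symmetry.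
have key : forall Q : {set {set T'}}, okP l m (f @: D) Q ->
    [set f @: (B : {set T}) | B in [set f @^-1: (B : {set T'}) | B in Q]] = Q.
  move=> Q /and3P[HQ _ _].
  rewrite -imset_comp -[RHS]imset_id; apply: eq_in_imset => B BQ /=.
  apply/setP => y; apply/imsetP/idP => [[z]|yB]; first by rewrite inE => zB ->.
  have := subsetP (partitionS HQ BQ) y yB; case/imsetP => z _ yz.
  by exists z; rewrite ?inE -?yz.
apply: (@bij_card _ _ _ _ (fun P : {set {set T}} => [set f @: (B : {set T}) | B in P]) (fun Q : {set {set T'}} => [set f @^-1: (B : {set T'}) | B in Q])).
- by move=> P; rewrite !inE okP_imset.
- by move=> Q; rewrite !inE => HQ; rewrite -(okP_imset injf) key.
- move=> P _ /=; rewrite -imset_comp -[RHS]imset_id; apply: eq_in_imset => B _ /=.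
  by apply/setP => y; rewrite !inE mem_imset.
- by move=> Q; rewrite inE => /key.
Qed.

Lemma cnt_ord (T : finType) l m (D : {set T}) :
  cnt l m D = cnt l m [set: 'I_#|D|].
Proof.
have -> : D = (@enum_val T (mem D)) @: [set: 'I_#|D|].
  apply/setP => x; apply/idP/imsetP => [xD|[i _ ->]]; last exact: enum_valP.
  by exists (enum_rank_in xD x); rewrite ?inE ?enum_rankK_in.
by rewrite (cnt_imset (@enum_val_inj T (mem D))) card_imset ?cardsT ?card_ord //; exact: enum_val_inj.
Qed.

Lemma notin_part (T : finType) (P : {set {set T}}) D C :
  partition P D -> C != set0 -> [disjoint C & D] -> C \notin P.
Proof.
move=> hP C0 dCD; apply/negP => CP.
move: dCD; rewrite -setI_eq0 (setIidPl (partitionS hP CP)); exact/negP.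
Qed.

Lemma ffact_split a j : a.+1 ^_ j = j * a ^_ j.-1 + a ^_ j.
Proof.
case: j => [|j] //=; rewrite ffactSS ffactnSr.
case: (leqP j a) => h; first by rewrite [j.+1 * _]mulnC -mulnDr mulnC; congr (_ * _); lia.
by rewrite ffact_small // !muln0.
Qed.

Lemma addx (T : finType) (D C : {set T}) (P : {set {set T}}) x :
  x \in D -> C \subset D :\ x -> partition P ((D :\ x) :\: C) ->
  [/\ x \notin C, x |: C \notin P, partition ((x |: C) |: P) D
    & pblock ((x |: C) |: P) x = x |: C].
Proof.
move=> xD CD hP.
have xC : x \notin C by apply/negP => /(subsetP CD); rewrite !inE eqxx.
have X0 : x |: C != set0 by apply/set0Pn; exists x; rewrite setU11.
have dis : [disjoint x |: C & (D :\ x) :\: C].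
  rewrite -setI_eq0; apply/eqP/setP => y; rewrite !inE.
  by case: (eqVneq y x) => [->|_] /=; [rewrite !andbF | case: (y \in C)].
have nin := notin_part hP X0 dis.
have hPn : partition ((x |: C) |: P) D.
  suff {1}<- : (x |: C) :|: ((D :\ x) :\: C) = D by exact: partitionU1.
  apply/setP => y; rewrite !inE; case: (eqVneq y x) => [->|_] /=; first by rewrite xD.
  case: (boolP (y \in C)) => yC //=.
  by have := subsetP CD y yC; rewrite !inE => /andP[].
split => //; apply: def_pblock; first exact: partition_trivIset hPn.
  exact: setU11.
exact: setU11.
Qed.

Lemma remx (T : finType) (D : {set T}) (P : {set {set T}}) x :
  partition P D -> x \in D ->
  [/\ pblock P x \in P, x \in pblock P x, pblock P x \subset D
    & partition (P :\ pblock P x) ((D :\ x) :\: (pblock P x :\ x))].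
Proof.
move=> hP xD.
have xc : x \in cover P by rewrite (cover_partition hP).
have BP := pblock_mem xc.
have xB : x \in pblock P x by rewrite mem_pblock.
split => //; first exact: partitionS hP BP.
have -> : (D :\ x) :\: (pblock P x :\ x) = D :\: pblock P x.
  apply/setP => y; rewrite !inE; case: (eqVneq y x) => [->|_] /=; first by rewrite xB.
  by [].
exact: partitionD1.
Qed.

Lemma part1 (T : finType) l m (D : {set T}) x : 0 < l -> x \in D ->
  #|[set P | okP l m D P & #|pblock P x| != l]| = m * cnt l m (D :\ x).
Proof.
move=> l0 xD.
have -> : m * cnt l m (D :\ x) =
    #|[set PC : {set {set T}} * {set T} | okP l m (D :\ x) PC.1 && (PC.2 \in PC.1)]|.
  rewrite (card_pair (okP l m (D :\ x)) (fun P (C : {set T}) => C \in P)) /cnt.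
  rewrite (eq_bigr (fun _ => m)); last first.
    by move=> P /and3P[_ /eqP <- _]; apply: eq_card => C; rewrite inE.
  by rewrite sum_nat_const mulnC; congr (_ * _); apply: eq_card => P; rewrite inE.
apply: (@bij_card _ _ _ _ (fun P => ((pblock P x :\ x) |: (P :\ pblock P x), pblock P x :\ x))
   (fun PC => (x |: PC.2) |: (PC.1 :\ PC.2))).
- move=> P; rewrite !inE => /andP[/and3P[hP /eqP cP /forall_inP sP] nl] /=.
  have [BP xB BD hP'] := remx hP xD.
  have lB : l < #|pblock P x| by rewrite ltn_neqAle eq_sym nl sP.
  have cB : #|pblock P x :\ x| = #|pblock P x|.-1 by rewrite (cardsD1 x (pblock P x)) xB.
  have B0 : pblock P x :\ x != set0 by rewrite -card_gt0 cB; lia.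
  have BxD : pblock P x :\ x \subset D :\ x by apply: setSD.
  have dis : [disjoint pblock P x :\ x & (D :\ x) :\: (pblock P x :\ x)].
    rewrite -setI_eq0; apply/eqP/setP => y; rewrite !inE.
    by case: (y \in pblock P x); case: (y == x); rewrite /= ?andbF.
  have nin := notin_part hP' B0 dis.
  rewrite /okP eqxx andbT; apply/and3P; split.
  + suff {1}<- : (pblock P x :\ x) :|: ((D :\ x) :\: (pblock P x :\ x)) = D :\ x.
      exact: partitionU1.
    apply/setP => y; rewrite !inE; have := subsetP BD y.
    by case: (y == x); case: (y \in pblock P x); case: (y \in D) => //= /(_ isT).
  + by move: cP; rewrite (cardsD1 (pblock P x) P) BP cardsU1 nin /= => ->.
  + apply/forall_inP => C; rewrite !inE => /orP[/eqP->|/andP[_ CP]]; last exact: sP.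
    by rewrite cB; lia.
- move=> [P' C]; rewrite inE /= => /andP[/and3P[hP /eqP cP /forall_inP sP] CP].
  have CD : C \subset D :\ x := partitionS hP CP.
  have [xC nin hPn pbX] := addx xD CD (partitionD1 hP CP).
  have Cl : l <= #|C| := sP C CP.
  rewrite !inE /okP hPn pbX cardsU1 xC /=; apply/andP; split; last by lia.
  apply/andP; split.
  + by rewrite cardsU1 nin /=; move: cP; rewrite (cardsD1 C P') CP /= => ->.
  + apply/forall_inP => B; rewrite !inE => /orP[/eqP->|/andP[_ BP]]; last exact: sP.
    by rewrite cardsU1 xC; lia.
- move=> P; rewrite !inE => /andP[/and3P[hP _ /forall_inP sP] nl] /=.
  have [BP xB BD hP'] := remx hP xD.
  have lB : l < #|pblock P x| by rewrite ltn_neqAle eq_sym nl sP.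
  have cB : #|pblock P x :\ x| = #|pblock P x|.-1 by rewrite (cardsD1 x (pblock P x)) xB.
  have B0 : pblock P x :\ x != set0 by rewrite -card_gt0 cB; lia.
  have dis : [disjoint pblock P x :\ x & (D :\ x) :\: (pblock P x :\ x)].
    rewrite -setI_eq0; apply/eqP/setP => y; rewrite !inE.
    by case: (y \in pblock P x); case: (y == x); rewrite /= ?andbF.
  have nin := notin_part hP' B0 dis.
  by rewrite (setD1K xB) (setU1K nin) (setD1K BP).
- move=> [P' C]; rewrite inE /= => /andP[/and3P[hP /eqP cP /forall_inP sP] CP].
  have CD : C \subset D :\ x := partitionS hP CP.
  have [xC nin hPn pbX] := addx xD CD (partitionD1 hP CP).
  by rewrite pbX (setU1K nin) (setU1K xC) (setD1K CP).
Qed.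

Lemma part2 (T : finType) l m (D : {set T}) x : 0 < l -> 0 < m -> x \in D ->
  #|[set P | okP l m D P & #|pblock P x| == l]| =
  'C(#|D :\ x|, l.-1) * cnt l m.-1 [set: 'I_(#|D :\ x| - l.-1)].
Proof.
move=> l0 m0 xD.
have -> : 'C(#|D :\ x|, l.-1) * cnt l m.-1 [set: 'I_(#|D :\ x| - l.-1)] =
    #|[set CP : {set T} * {set {set T}} | ((CP.1 \subset D :\ x) && (#|CP.1| == l.-1))
         && okP l m.-1 ((D :\ x) :\: CP.1) CP.2]|.
  rewrite (card_pair (fun C : {set T} => (C \subset D :\ x) && (#|C| == l.-1))
             (fun C => okP l m.-1 ((D :\ x) :\: C))).
  rewrite (eq_bigr (fun _ => cnt l m.-1 [set: 'I_(#|D :\ x| - l.-1)])); last first.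
    move=> C /andP[CD /eqP cC].
    have -> : #|D :\ x| - l.-1 = #|(D :\ x) :\: C|.
      by rewrite [#|(D :\ x) :\: C|]cardsD (setIidPr CD) cC.
    by rewrite -cnt_ord /cnt.
  rewrite sum_nat_const -cards_draws; congr (_ * _); apply: eq_card => C; by rewrite !inE.
apply: (@bij_card _ _ _ _ (fun P => (pblock P x :\ x, P :\ pblock P x))
   (fun CP => (x |: CP.1) |: CP.2)).
- move=> P; rewrite !inE => /andP[/and3P[hP /eqP cP /forall_inP sP] /eqP nl] /=.
  have [BP xB BD hP'] := remx hP xD.
  have cB : #|pblock P x :\ x| = #|pblock P x|.-1 by rewrite (cardsD1 x (pblock P x)) xB.
  rewrite setSD //= cB nl eqxx /= /okP hP' /=; apply/andP; split.
  + by move: cP; rewrite (cardsD1 (pblock P x) P) BP /= => <-.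
  + by apply/forall_inP => C; rewrite !inE => /andP[_ CP]; exact: sP.
- move=> [C P']; rewrite inE /= => /andP[/andP[CD /eqP cC] /and3P[hP /eqP cP /forall_inP sP]].
  have [xC nin hPn pbX] := addx xD CD hP.
  have cX : #|x |: C| = l by rewrite cardsU1 xC cC; lia.
  rewrite !inE /okP hPn pbX cX eqxx andbT /=; apply/andP; split.
  + by rewrite cardsU1 nin cP /=; lia.
  + apply/forall_inP => B; rewrite !inE => /orP[/eqP->|BP]; last exact: sP.
    by rewrite cX.
- move=> P; rewrite !inE => /andP[/and3P[hP _ _] _] /=.
  have [BP xB BD hP'] := remx hP xD.
  by rewrite (setD1K xB) (setD1K BP).
- move=> [C P']; rewrite inE /= => /andP[/andP[CD /eqP cC] /and3P[hP /eqP cP /forall_inP sP]].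
  have [xC nin hPn pbX] := addx xD CD hP.
  by rewrite pbX (setU1K nin) (setU1K xC).
Qed.

Lemma cnt_rec (T : finType) l m (D : {set T}) x : 0 < l -> 0 < m -> x \in D ->
  cnt l m D = m * cnt l m (D :\ x) +
  'C(#|D :\ x|, l.-1) * cnt l m.-1 [set: 'I_(#|D :\ x| - l.-1)].
Proof.
move=> l0 m0 xD.
rewrite -part1 // -part2 // addnC /cnt.
rewrite -(cardsID [set P | #|pblock P x| == l] [set P | okP l m D P]).
congr (_ + _); apply: eq_card => P; rewrite !inE; by case: (okP _ _ _ _); case: (_ == l).
Qed.

Theorem mainTheorem9 (n k r l : nat) :
  0 < n -> 0 < k -> 0 < r -> 0 < l ->
  Sge l n k r =
    (k + r - 1) * Sge l n.-1 k r
    + 'C(n.-1, l.-1) * ((k - 1) * Sge l (n - l) k.-1 r + Sge l (n - l) k r.-1).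
Proof.
case: n => // n _; case: k => // k _; case: r => // r _ l0.
rewrite !Sge_cnt /=.
have -> : r.+1 + k.+1 - 1 = (r + k).+1 by lia.
have -> : r.+1 + k - 1 = r + k by lia.
have -> : r + k.+1 - 1 = r + k by lia.
have -> : k.+1 + r.+1 - 1 = (r + k).+1 by lia.
have -> : k.+1 - 1 = k by lia.
rewrite (@cnt_rec _ l (r + k).+1 [set: 'I_n.+1] ord_max) // ?inE //.
have cD : #|[set: 'I_n.+1] :\ ord_max| = n.
  by have := cardsD1 ord_max [set: 'I_n.+1]; rewrite cardsT card_ord in_setT add1n => -[].
rewrite [cnt _ _ (_ :\ _)]cnt_ord cD /=.
have -> : n.+1 - l = n - l.-1 by lia.
rewrite (ffact_split (r + k) k).
set a := cnt _ _ [set: 'I_n]; set b := cnt _ _ [set: 'I_(n - l.-1)].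
set c := 'C(_, _); set u := (r + k) ^_ k.-1; set v := (r + k) ^_ k.
nia.
Qed.
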